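(* For all integers $L\ge 0$ and $n\ge 1$, $$S_L(n+2,n)=\frac{n(n+1)(n+2)}{3\cdot 2^3}\left[\frac{(n+2)!}{2}\right]^{L}\left(\frac{3}{2^L}(n-1)+\frac{4}{3^L}\right).$$ In particular, $S_0(n+2,n)=\frac{n(n+1)(n+2)(3n+1)}{4!}$.
   Context: For an integer $L\ge 0$ let ${}_0F_L(z)=\sum_{n=0}^{\infty}\frac{z^n}{(n!)^{L+1}}$. Define the numbers $S_L(n,l)$ ($n,l\ge 0$) by the formal power series identities $\frac{({}_0F_L(z)-1)^l}{l!}=\sum_{n\ge l}\frac{S_L(n,l)}{(n!)^{L+1}}z^n$ for each $l\ge 0$. In particular $S_0(n,l)$ are the Stirling numbers of the second kind. *)

(* Defs.v *)
From HB Require Import structures.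
From mathcomp Require Import all_boot all_order all_algebra.
Set Implicit Arguments. Unset Strict Implicit. Unset Printing Implicit Defensive.
Import GRing.Theory Num.Theory.
Local Open Scope ring_scope.

(* Truncation to degree N of the formal power series
   0F_L(z) = sum_{k>=0} z^k / (k!)^(L+1), with rational coefficients.
   Coefficients of degree <= N of powers of 0F_L(z)-1 are determined by
   this truncation, so it faithfully computes the formal power series
   coefficients used below. *)
Definition F0L_trunc (L N : nat) : {poly rat} :=
  \poly_(k < N.+1) (((k`!)%:R : rat) ^+ L.+1)^-1.

(* S_L(n,l) defined by  (0F_L(z)-1)^l / l! = sum_n S_L(n,l)/(n!)^(L+1) z^n,
   i.e. S_L(n,l) = (n!)^(L+1) * [z^n] (0F_L(z)-1)^l / l!. *)
Definition SL (L n l : nat) : rat :=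
  ((n`!)%:R ^+ L.+1) * ((F0L_trunc L n - 1) ^+ l)`_n / (l`!)%:R.

(* Main.v *)
Require Import Defs.
From HB Require Import structures.
From mathcomp Require Import all_boot all_order all_algebra.
From mathcomp Require Import ring.
Import GRing.Theory Num.Theory.
Local Open Scope ring_scope.

Lemma powQ (Q : {poly rat}) (b c : rat) (m : nat) :
  Q`_0 = 1 -> Q`_1 = b -> Q`_2 = c ->
  [/\ (Q ^+ m)`_0 = 1, (Q ^+ m)`_1 = m%:R * b &
      (Q ^+ m)`_2 = m%:R * c + m%:R * (m%:R - 1) / 2 * b ^+ 2].
Proof.
move=> h0 h1 h2; elim: m => [|m [e0 e1 e2]].
  rewrite expr0 !coef1 /=; split => //; ring.
rewrite exprSr !coefM !big_ord_recr !big_ord0 /= !add0r.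
rewrite !subnn !subn0 /= e0 e1 e2 h0 h1 h2.
rewrite -addn1 natrD; split => //; first by ring.
by field.
Qed.

Lemma coefP (L N k : nat) : (0 < k <= N)%N ->
  (F0L_trunc L N - 1)`_k = ((k`!)%:R ^+ L.+1)^-1.
Proof.
case/andP=> k0 kN; rewrite coefB coef1 coef_poly ltnS kN.
case: k k0 {kN} => // k _ /=. by rewrite subr0.
Qed.

Lemma main1 (L n : nat) : (1 <= n)%N ->
    SL L (n + 2) n =
      (n%:R * (n.+1)%:R * (n.+2)%:R / (3 * 2 ^+ 3)) *
      ((((n.+2)`!)%:R / 2) ^+ L) *
      (3 / 2 ^+ L * (n%:R - 1) + 4 / 3 ^+ L).
Proof.
move=> n1.
set P := F0L_trunc L (n + 2) - 1.
set Q := \poly_(k < size P) P`_k.+1.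
have PQ : P = Q * 'X.
  apply/polyP => i; rewrite coefMX; case: i => [|i] /=.
    by rewrite /P coefB coef1 coef_poly /= fact0 expr1n invr1 subrr.
  rewrite coef_poly; case: ltnP => // hi.
  by rewrite nth_default // ltnW.
have hq : forall k, (k <= 2)%N -> Q`_k = (((k.+1)`!)%:R ^+ L.+1)^-1.
  move=> k hk; rewrite coef_poly.
  have hk' : (0 < k.+1 <= n + 2)%N by rewrite addn2 /= ltnS (leq_trans hk).
  case: ltnP => h; first by rewrite /P coefP.
  have := nth_default 0 (leqW h); rewrite /P coefP // => /eqP.

have q0 : Q`_0 = 1 by rewrite hq // (_ : 1`! = 1)%N // expr1n invr1.
have [_ _ e2] := @powQ Q _ _ n q0 (hq 1%N erefl) (hq 2%N erefl).
rewrite /SL -/P PQ exprMn coefMXn ltnNge leq_addr /= addKn e2.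
have fe : (n.+2)`! = ((n.+2) * (n.+1) * n`!)%N by rewrite !factS mulnA.
rewrite addn2 fe (_ : 3`! = 2 * 3)%N // (_ : 2`! = 2)%N //.
rewrite !natrM !exprMn !exprVn ?exprMn.
have h2 : (2 : rat) ^+ L != 0 by rewrite expf_eq0 pnatr_eq0 andbF.
have h3 : (3 : rat) ^+ L != 0 by rewrite expf_eq0 pnatr_eq0 andbF.
have hf : (n`!)%:R != 0 :> rat by rewrite pnatr_eq0 -lt0n fact_gt0.
have hf' : (n`!)%:R ^+ L != 0 :> rat by rewrite expf_eq0 (negbTE hf) andbF.
rewrite !exprS.
field.
by rewrite h2 h3 hf.
Qed.

Theorem mainTheorem5 :
  (forall L n : nat, (1 <= n)%N ->
    SL L (n + 2) n =
      (n%:R * (n.+1)%:R * (n.+2)%:R / (3 * 2 ^+ 3)) *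
      ((((n.+2)`!)%:R / 2) ^+ L) *
      (3 / 2 ^+ L * (n%:R - 1) + 4 / 3 ^+ L))
  /\
  (forall n : nat, (1 <= n)%N ->
    SL 0 (n + 2) n =
      n%:R * (n.+1)%:R * (n.+2)%:R * (3 * n%:R + 1) / (4`!)%:R).
Proof.
split; first exact: main1.
move=> n n1; rewrite main1 // !expr0 mulr1.
rewrite !factS fact0 /=; by field.
Qed.
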